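(* Let $A,B\in M_n(\mathbb{R}_+)$ be simultaneously triangularizable. Then their characteristic polynomial $P_{A,B}(z)$ is a product of $n$ linear factors, i.e. there exist $\alpha_i,\beta_i\ge 0$ ($i=1,\dots,n$) with $P_{A,B}(z)=\prod_{i=1}^n(1\oplus\alpha_i z_1\oplus\beta_i z_2)$ for all $z_1,z_2\ge0$.
   Context: Max algebra: $\mathbb{R}_+$ the nonnegative reals with $a\oplus b=\max\{a,b\}$ and ordinary multiplication; for matrices, $(AB)_{ij}=\max_k a_{ik}b_{kj}$ and $(A\oplus B)_{ij}=\max\{a_{ij},b_{ij}\}$. $GL_n(\mathbb{R}_+)$ is the set of matrices invertible under this product (the generalized permutation matrices); $A,B$ are simultaneously triangularizable if one $P\in GL_n(\mathbb{R}_+)$ makes both $P^{-1}AP$ and $P^{-1}BP$ upper triangular. The tropical determinant of $M=(m_{ij})$ is $\mathrm{tdet}(M)=\max_{\sigma\in S_n}\prod_{i=1}^n m_{i\sigma(i)}$. For $z=(z_1,z_2)$ with $z_1,z_2\ge0$, let $M(z)=I\oplus(z_1A)\oplus(z_2B)$, where $I$ is the identity matrix ($1$ on the diagonal, $0$ elsewhere); the characteristic polynomial of the pair is $P_{A,B}(z)=\mathrm{tdet}(M(z))$. *)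

(* Defs.v *)
From HB Require Import structures.
From mathcomp Require Import all_boot all_order all_algebra all_fingroup.
Set Implicit Arguments. Unset Strict Implicit. Unset Printing Implicit Defensive.
Import Order.TTheory GRing.Theory Num.Theory.
Local Open Scope ring_scope.

Section MaxAlgebra.
Variable R : realFieldType.
Variable n : nat.

Definition nonneg_mx (A : 'M[R]_n) : Prop := forall i j, 0 <= A i j.

(* max-algebra product: (AB)_ij = max_k a_ik b_kj  (0 is neutral for max on R_+) *)
Definition maxmul (A B : 'M[R]_n) : 'M[R]_n :=
  \matrix_(i, j) \big[Num.max/0]_(k < n) (A i k * B k j).

Definition maxadd (A B : 'M[R]_n) : 'M[R]_n :=
  \matrix_(i, j) Num.max (A i j) (B i j).

Definition maxid : 'M[R]_n := \matrix_(i, j) (i == j)%:R.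

Definition upper_tri (A : 'M[R]_n) : Prop := forall i j : 'I_n, (j < i)%N -> A i j = 0.

Definition max_inverse (P Q : 'M[R]_n) : Prop :=
  nonneg_mx P /\ nonneg_mx Q /\ maxmul P Q = maxid /\ maxmul Q P = maxid.

Definition sim_triangularizable (A B : 'M[R]_n) : Prop :=
  exists P Pinv : 'M[R]_n, max_inverse P Pinv /\
    upper_tri (maxmul (maxmul Pinv A) P) /\ upper_tri (maxmul (maxmul Pinv B) P).

Definition tdet (M : 'M[R]_n) : R :=
  \big[Num.max/0]_(s : 'S_n) \prod_(i < n) M i (s i).

Definition charM (A B : 'M[R]_n) (z1 z2 : R) : 'M[R]_n :=
  maxadd (maxadd maxid (z1 *: A)) (z2 *: B).

Definition charpoly2 (A B : 'M[R]_n) (z1 z2 : R) : R := tdet (charM A B z1 z2).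

End MaxAlgebra.

(* Main.v *)
Require Import Defs.
From mathcomp Require Import all_boot all_order all_algebra all_fingroup.
From mathcomp Require Import ring.
Import Order.TTheory GRing.Theory Num.Theory.
Local Open Scope ring_scope.

Lemma perm_lt_ex n (s : 'S_n) : s != 1%g -> exists i : 'I_n, (s i < i)%N.
Proof.
move=> s1; apply/existsP; apply: contraR s1; rewrite negb_exists => /forallP H.
have le (i : 'I_n) : (i <= s i)%N by rewrite leqNgt; apply: H.
have := leqif_sum (P := predT) (C := fun i : 'I_n => i == s i :> nat)
  (E1 := fun i : 'I_n => nat_of_ord i) (E2 := fun i => nat_of_ord (s i))
  (fun i _ => leqif_eq (le i)).
rewrite [X in (X <= _ ?= iff _)%N](reindex_inj (@perm_inj _ s)) /= => [[_]].
rewrite eqxx => /esym/forallP E.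
by apply/eqP/permP => i; rewrite perm1; apply/val_inj/esym/eqP/E.
Qed.

Section S.
Variable R : realFieldType.

Lemma bigmax_single (I : finType) (F : I -> R) k0 :
  (forall k, k != k0 -> F k = 0) -> 0 <= F k0 -> \big[Num.max/0]_k F k = F k0.
Proof.
move=> H0 H1; apply/le_anti; rewrite le_bigmax andbT.
apply/bigmax_leP; split => // k _.
by case: (eqVneq k k0) => [->//|/H0->].
Qed.

Lemma bigmax_attained (I : finType) (F : I -> R) :
  \big[Num.max/0]_k F k != 0 -> exists k, F k = \big[Num.max/0]_k F k.
Proof.
apply: (big_ind (fun y => y != 0 -> exists k, F k = y)).
- by rewrite eqxx.
- move=> a b Ha Hb; rewrite /Num.max; case: ifP => _; [exact: Hb|exact: Ha].
- by move=> i _ _; exists i.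
Qed.

Lemma bigmax_ge0 (I : finType) (F : I -> R) : 0 <= \big[Num.max/0]_k F k.
Proof. by rewrite bigmax_idl le_max lexx. Qed.
End S.

Section S2.
Variable R : realFieldType.

Lemma tdet_conj n (M M' : 'M[R]_n) (f : 'I_n -> 'I_n) (d : 'I_n -> R) :
  injective f -> (forall i, d i != 0) ->
  (forall i j, M' i j = (d i)^-1 * M (f i) (f j) * d j) -> tdet M' = tdet M.
Proof.
move=> finj dn0 HM; rewrite /tdet.
set p := perm finj.
rewrite [RHS](reindex_inj (conjg_inj p)); apply: eq_bigr => s _.
rewrite [RHS](reindex_inj finj).
have -> : \prod_i M (f i) ((s ^ p)%g (f i)) = \prod_i M (f i) (f (s i)).
  by apply: eq_bigr => i _; rewrite -!(permE finj) permJ.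
rewrite (eq_bigr (fun i => (d i)^-1 * M (f i) (f (s i)) * d (s i))); last by move=> i _; rewrite HM.
rewrite !big_split /= prodfV.
have -> : \prod_i d (s i) = \prod_i d i by rewrite [RHS](reindex_inj (@perm_inj _ s)).
rewrite mulrC mulrA mulfV ?mul1r //.
by apply/prodf_neq0 => i _; apply: dn0.
Qed.

Lemma tdet_trig n (M : 'M[R]_n) : nonneg_mx M -> upper_tri M ->
  tdet M = \prod_i M i i.
Proof.
move=> Mge0 Mt; rewrite /tdet; apply/le_anti/andP; split.
  apply/bigmax_leP; split; first by apply: prodr_ge0 => i _.
  move=> s _; case: (eqVneq s 1%g) => [->|/perm_lt_ex [i Hi]].
    by rewrite (eq_bigr (fun i => M i i)) // => i _; rewrite perm1.
  rewrite (bigD1 i) //= Mt // mul0r; apply: prodr_ge0 => k _; exact: Mge0.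
apply: (bigmax_sup 1%g) => //; rewrite le_eqVlt; apply/orP; left; apply/eqP.
by apply: eq_bigr => i _; rewrite perm1.
Qed.
End S2.
Set Implicit Arguments. Unset Strict Implicit.

Section S3.
Variables (R : realFieldType) (n : nat).

Lemma maxmul_E (X Y : 'M[R]_n) i j : maxmul X Y i j = \big[Num.max/0]_k (X i k * Y k j).
Proof. by rewrite /maxmul mxE. Qed.

Lemma inv_off (X Y : 'M[R]_n) : nonneg_mx X -> nonneg_mx Y -> maxmul X Y = maxid R n ->
  forall i j k, i != j -> X i k * Y k j = 0.
Proof.
move=> hX hY E i j k ij; apply/le_anti; rewrite mulr_ge0 // andbT.
have : maxmul X Y i j = 0 by rewrite E /maxid mxE (negPf ij).
by rewrite maxmul_E => <-; apply: le_bigmax.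
Qed.

Lemma inv_diag (X Y : 'M[R]_n) : maxmul X Y = maxid R n ->
  forall i, exists k, X i k * Y k i = 1.
Proof.
move=> E i; have e1 : maxmul X Y i i = 1 by rewrite E /maxid mxE eqxx.
rewrite maxmul_E in e1; have := @bigmax_attained R _ (fun k => X i k * Y k i).
by rewrite e1 oner_neq0 => /(_ isT).
Qed.

Lemma prod1_pos (x y : R) : 0 <= x -> 0 <= y -> x * y = 1 -> 0 < x /\ 0 < y.
Proof.
move=> hx hy e; rewrite !lt_def hx hy !andbT; split; apply/eqP => z;
  by move: e; rewrite z ?mul0r ?mulr0 => /eqP; rewrite eq_sym oner_eq0.
Qed.

Variables (P Q : 'M[R]_n).
Hypothesis hPQ : max_inverse P Q.

Definition gpi j := odflt j [pick k | Q j k * P k j == 1].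

Lemma piP j : Q j (gpi j) * P (gpi j) j = 1.
Proof.
rewrite /gpi; case: pickP => [k /eqP //|H].
case: hPQ => _ [_ [_ E]]; have [k hk] := inv_diag E j.
by move: (H k); rewrite hk eqxx.
Qed.

Lemma Qpos j : 0 < Q j (gpi j).
Proof. by case: hPQ => hP [hQ _]; case: (prod1_pos (hQ _ _) (hP _ _) (piP j)). Qed.
Lemma Ppos j : 0 < P (gpi j) j.
Proof. by case: hPQ => hP [hQ _]; case: (prod1_pos (hQ _ _) (hP _ _) (piP j)). Qed.

Lemma Q0 i k : k != gpi i -> Q i k = 0.
Proof.
case: hPQ => hP [hQ [E1 E2]] kn.
have ne : gpi i != k by rewrite eq_sym.
have := inv_off hP hQ E1 i ne.
by move/eqP; rewrite mulf_eq0 (gt_eqF (Ppos i)) /= => /eqP.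
Qed.

Lemma P0 l j : l != gpi j -> P l j = 0.
Proof.
case: hPQ => hP [hQ [E1 E2]] ln; apply/le_anti; rewrite hP andbT leNgt.
apply/negP => pp.
have [m hm] := inv_diag E1 l.
have [_ qp] := prod1_pos (hP _ _) (hQ _ _) hm.
have mj : m = j.
  apply/eqP; apply/negPn/negP => ne.
  have := inv_off hQ hP E2 l ne; move/eqP; rewrite mulf_eq0.
  by rewrite (gt_eqF qp) (gt_eqF pp).
subst m; move: qp; rewrite Q0 ?ltxx //.
Qed.

Lemma gpi_inj : injective gpi.
Proof.
case: hPQ => hP [hQ [E1 E2]] i j e; apply/eqP; apply: contraT => ne.
have := inv_off hQ hP E2 (gpi i) ne; move/eqP; rewrite mulf_eq0.
by rewrite (gt_eqF (Qpos i)) e (gt_eqF (Ppos j)).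
Qed.

Lemma conjE (X : 'M[R]_n) i j : nonneg_mx X ->
  maxmul (maxmul Q X) P i j = (P (gpi i) i)^-1 * X (gpi i) (gpi j) * P (gpi j) j.
Proof.
move=> hX; case: hPQ => hP [hQ _].
have QE : Q i (gpi i) = (P (gpi i) i)^-1.
  by rewrite -[LHS](mulfK (lt0r_neq0 (Ppos i))) piP mul1r.
have QX l : maxmul Q X i l = Q i (gpi i) * X (gpi i) l.
  rewrite maxmul_E (@bigmax_single _ _ _ (gpi i)) //.
    by move=> k kn; rewrite Q0 // mul0r.
  by rewrite mulr_ge0 // ltW // Qpos.
rewrite maxmul_E (@bigmax_single _ _ _ (gpi j)).
- by rewrite QX QE.
- by move=> k kn; rewrite P0 // mulr0.
- by rewrite QX !mulr_ge0 // ltW // Qpos.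
Qed.
End S3.

Lemma charME (R : realFieldType) (n : nat) (X Y : 'M[R]_n) z1 z2 i j :
  Defs.charM X Y z1 z2 i j = Num.max (Num.max (i == j)%:R (z1 * X i j)) (z2 * Y i j).
Proof. by rewrite /Defs.charM /maxadd !mxE. Qed.

Theorem theorem3p20 (R : realFieldType) (n : nat) (A B : 'M[R]_n) :
  nonneg_mx A -> nonneg_mx B -> sim_triangularizable A B ->
  exists alpha beta : 'I_n -> R,
    (forall i, 0 <= alpha i) /\ (forall i, 0 <= beta i) /\
    forall z1 z2 : R, 0 <= z1 -> 0 <= z2 ->
      charpoly2 A B z1 z2 =
      \prod_(i < n) Num.max 1 (Num.max (alpha i * z1) (beta i * z2)).
Proof.
move=> hA hB [P [Q [hPQ [tA tB]]]].
set A' := maxmul (maxmul Q A) P; set B' := maxmul (maxmul Q B) P.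
have dpos : forall j, 0 < P (gpi P Q j) j by move=> j; apply: (Ppos hPQ).
have nn (X : 'M[R]_n) : nonneg_mx X -> nonneg_mx (maxmul (maxmul Q X) P).
  by move=> hX i j; rewrite (conjE hPQ) // !mulr_ge0 // ?invr_ge0 ?hX // ltW.
exists (fun i => A' i i), (fun i => B' i i); split; first by move=> i; apply: nn.
split; first by move=> i; apply: nn.
move=> z1 z2 h1 h2; rewrite /charpoly2.
rewrite -(@tdet_conj R n (Defs.charM A B z1 z2) (Defs.charM A' B' z1 z2) (gpi P Q) (fun j => P (gpi P Q j) j)).
- rewrite tdet_trig.
  + apply: eq_bigr => i _; rewrite !charME eqxx maxA mulrC (mulrC z2) //.
  + by move=> i j; rewrite !charME !le_max ler0n.
  + move=> i j ji; rewrite !charME (tA _ _ ji) (tB _ _ ji) !mulr0.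
    rewrite (_ : (i == j) = false) ?maxxx //.
    by apply/negbTE; rewrite neq_ltn ji orbT.
- exact: (gpi_inj hPQ).
- by move=> j; rewrite lt0r_neq0.
- move=> i j; rewrite !charME /A' /B' !(conjE hPQ) // (inj_eq (gpi_inj hPQ)).
  have ap : 0 < P (gpi P Q i) i by apply: dpos.
  have bp : 0 < P (gpi P Q j) j by apply: dpos.
  set a := P (gpi P Q i) i in ap *; set b := P (gpi P Q j) j in bp *.
  have ha : a != 0 by rewrite lt0r_neq0.
  have c0 : 0 <= a^-1 * b by rewrite mulr_ge0 // ?invr_ge0 ltW.
  rewrite [RHS]mulrAC maxr_pMr // maxr_pMr //.
  congr (Num.max (Num.max _ _) _); last by ring.
    case: (eqVneq i j) => [e|ne]; last by rewrite mulr0.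
    by subst j; rewrite mulr1 /b -/a mulVf.
  by ring.
Qed.
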